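(* Let $\mathbb P$ be a forcing by Silver trees, $S,T\in\mathbb P$, $f:2^\omega\to 2^\omega$ continuous, and $\sigma\in 2^{<\omega}$. Then: (i) there are $S',T'\in\mathbb P$ with $S'\subseteq S$, $T'\subseteq T$ and $[T']\cap(\sigma\cdot f[[S']])=\emptyset$; (ii) if $\tau\in 2^{<\omega}$, $T=\tau\cdot S$, and $f$ is regular on $S$ inside $\mathbb P$, then there are $S',T'\in\mathbb P$ with $S'\subseteq S$, $T'\subseteq T$, $T'=\tau\cdot S'$ and $[T']\cap(\sigma\cdot f[[S']])=\emptyset$.
   Context: $2^{<\omega}$ is the set of finite binary strings, $2^\omega$ the Cantor space. A set $T\subseteq 2^{<\omega}$ is a Silver tree if there are strings $u_0,u_1,\dots$ such that $T$ consists exactly of all strings $u_0{}^\frown i_0{}^\frown\cdots{}^\frown u_m{}^\frown i_m$ ($m<\omega$, $i_k\in\{0,1\}$) and all their initial segments; $[T]$ is the set of its infinite branches. For $u\in T$, $T\restriction u=\{t\in T:u\subseteq t\text{ or }t\subseteq u\}$. Actions: for $s\in 2^{<\omega}$ and $x\in 2^\omega$, $(s\cdot x)(k)=x(k)+s(k)\bmod 2$ for $k<|s|$ and $(s\cdot x)(k)=x(k)$ otherwise; $s\cdot X=\{s\cdot x:x\in X\}$; for strings $s\in 2^m$, $t\in 2^k$ with $m\le k$, $(s\cdot t)(j)=t(j)+s(j)\bmod 2$ for $j<m$ and $=t(j)$ for $m\le j<k$, and if $m>k$, $s\cdot t=(s\restriction k)\cdot t$; $s\cdot T=\{s\cdot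 t:t\in T\}$. A forcing by Silver trees is a set $\mathbb P$ of Silver trees closed under $T\mapsto T\restriction u$ ($u\in T$) and $T\mapsto\sigma\cdot T$. A continuous $f:2^\omega\to 2^\omega$ is regular on $T\in\mathbb P$ inside $\mathbb P$ if there is no $T'\in\mathbb P$ with $T'\subseteq T$ and no $\sigma\in 2^{<\omega}$ such that $f(x)=\sigma\cdot x$ for all $x\in[T']$. *)

(* Defs.v *)
From mathcomp Require Import all_boot.
Set Implicit Arguments. Unset Strict Implicit. Unset Printing Implicit Defensive.

Definition str := seq bool.
Definition cantor := nat -> bool.
Definition strset := str -> Prop.

Definition restr (x : cantor) (n : nat) : str := mkseq x n.

Definition cantor_continuous (f : cantor -> cantor) : Prop :=
  forall (x : cantor) (n : nat), exists m : nat, forall y : cantor,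
    (forall k, k < m -> y k = x k) -> forall k, k < n -> f y k = f x k.

(* u_0 ^ i_0 ^ u_1 ^ i_1 ^ ... ^ u_m ^ i_m, where i = [:: i_0; ...; i_m] *)
Fixpoint silver_node (u : nat -> str) (k : nat) (i : seq bool) : str :=
  match i with
  | [::] => [::]
  | b :: i' => u k ++ b :: silver_node u k.+1 i'
  end.

Definition silver_tree (T : strset) : Prop :=
  exists u : nat -> str, forall t : str,
    T t <-> exists i : seq bool, 0 < size i /\ prefix t (silver_node u 0 i).

Definition body (T : strset) (x : cantor) : Prop := forall n, T (restr x n).

Definition tree_restr (T : strset) (u : str) : strset :=
  fun t => T t /\ (prefix u t \/ prefix t u).

Definition act (s : str) (x : cantor) : cantor :=
  fun k => if k < size s then xorb (x k) (nth false s k) else x k.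

(* s . t for strings (covers both cases |s| <= |t| and |s| > |t|) *)
Definition act_str (s t : str) : str :=
  mkseq (fun j => if j < size s then xorb (nth false t j) (nth false s j)
                  else nth false t j) (size t).

Definition act_tree (s : str) (T : strset) : strset :=
  fun t' => exists t, T t /\ t' = act_str s t.

Definition subtree (S T : strset) : Prop := forall t, S t -> T t.

Definition silver_forcing (P : strset -> Prop) : Prop :=
  (forall T, P T -> silver_tree T) /\
  (forall T u, P T -> T u -> P (tree_restr T u)) /\
  (forall T s, P T -> P (act_tree s T)).

Definition regular_on (P : strset -> Prop) (f : cantor -> cantor) (T : strset) : Prop :=
  ~ exists T' : strset, exists s : str,
      P T' /\ subtree T' T /\ forall x, body T' x -> forall k, f x k = act s x k.

Definition disjoint_image (T : strset) (s : str) (f : cantor -> cantor) (S : strset) : Prop :=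
  forall y, body S y -> ~ body T (act s (f y)).

(* Main.v *)
From Stdlib Require Import Classical.
Require Import Defs.
From mathcomp Require Import all_boot.
Set Implicit Arguments. Unset Strict Implicit.

Lemma act_pt (s : str) (v : cantor) k : act s v k = xorb (v k) (nth false s k).
Proof.
rewrite /act; case: ltnP => // h; rewrite nth_default //; by case: (v k).
Qed.

Lemma nth_restr (x : cantor) n k : k < n -> nth false (restr x n) k = x k.
Proof. by move=> h; rewrite /restr nth_mkseq. Qed.

Lemma size_restr (x : cantor) n : size (restr x n) = n.
Proof. by rewrite /restr size_mkseq. Qed.

Lemma prefix_nth (s t : str) k : prefix s t -> k < size s -> nth false s k = nth false t k.
Proof. by move=> /prefixP [r ->] h; rewrite nth_cat h. Qed.

Lemma comp_nth (a t : str) k : (prefix a t \/ prefix t a) -> k < size a -> k < size t ->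
  nth false a k = nth false t k.
Proof.
case=> h h1 h2; first exact: prefix_nth.
by rewrite (prefix_nth h h2).
Qed.

Lemma body_restr_agree (S : strset) (a : str) (y : cantor) k :
  body (tree_restr S a) y -> k < size a -> y k = nth false a k.
Proof.
move=> hb hk; have [_ hc] := hb (size a).
by rewrite (comp_nth hc hk) ?size_restr // nth_restr.
Qed.

Lemma act_str_nth (s t : str) k : k < size t ->
  nth false (act_str s t) k = xorb (nth false t k) (nth false s k).
Proof.
move=> hk; rewrite /act_str nth_mkseq //; case: ltnP => // h.
rewrite (nth_default _ h); by case: (nth false t k).
Qed.

Theorem lemma7p2 (P : strset -> Prop) (S T : strset) (f : cantor -> cantor) (sigma : str) :
  silver_forcing P -> P S -> P T -> cantor_continuous f ->
  (exists S' T' : strset, P S' /\ P T' /\ subtree S' S /\ subtree T' T /\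
      disjoint_image T' sigma f S')
  /\
  (forall tau : str, T = act_tree tau S -> regular_on P f S ->
    exists S' T' : strset, P S' /\ P T' /\ subtree S' S /\ subtree T' T /\
      T' = act_tree tau S' /\ disjoint_image T' sigma f S').
Proof.
move=> [Psil [Pres Pact]] PS PT fc; split.
- case: (classic (exists y, body S y)) => [[y hy]|hno]; last first.
    exists S, T; do 4 (split => //).
    by move=> y hy _; apply: hno; exists y.
  have [u hu] := Psil T PT.
  set z := act sigma (f y).
  set n0 := size (u 0).
  set b := ~~ z n0.
  set t := u 0 ++ [:: b].
  have Tt : T t.
    apply/hu; exists [:: b]; split => //=; exact: prefix_refl.
  have [m hm] := fc y n0.+1.
  exists (tree_restr S (restr y m)), (tree_restr T t).
  split; first exact: Pres.
  split; first exact: Pres.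
  split; first by move=> s [].
  split; first by move=> s [].
  move=> y' hy' hT.
  have agree : forall k, k < m -> y' k = y k.
    move=> k hk; rewrite (body_restr_agree hy') ?size_restr //.
    by rewrite nth_restr.
  have e1 := hm y' agree n0 (ltnSn n0).
  have e2 := body_restr_agree hT (k := n0).
  rewrite /t size_cat /= addn1 in e2.
  have := e2 (ltnSn n0).
  rewrite nth_cat ltnn subnn /= act_pt e1 -act_pt -/z /b.
  by case: (z n0).
- move=> tau -> hreg.
  set rho : str := mkseq (fun j => xorb (nth false sigma j) (nth false tau j))
                     (maxn (size sigma) (size tau)).
  have rhoE : forall k, nth false rho k = xorb (nth false sigma k) (nth false tau k).
    move=> k; rewrite /rho; case: (ltnP k (maxn (size sigma) (size tau))) => h.
      by rewrite nth_mkseq.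
    rewrite nth_default ?size_mkseq //.
    rewrite geq_max in h; case/andP: h => h1 h2.
    by rewrite !nth_default.
  have [x [k [hx hk]]] : exists x k, body S x /\ f x k <> act rho x k.
    apply: NNPP => hn; apply: hreg; exists S, rho; do 2 (split => //).
    move=> x hx k; apply: NNPP => hne; apply: hn; by exists x, k.
  have hk' : act sigma (f x) k <> act tau x k.
    move=> e; apply: hk; move: e; rewrite !act_pt rhoE.
    by case: (f x k); case: (x k); case: (nth false sigma k); case: (nth false tau k).
  have [m hm] := fc x k.+1.
  set N := maxn m k.+1.
  set a := restr x N.
  have Sa : S a by apply: hx.
  exists (tree_restr S a), (act_tree tau (tree_restr S a)).
  split; first exact: Pres.
  split; first by apply: Pact; apply: Pres.
  split; first by move=> s [].
  split; first by move=> s [t0 [[h _] ->]]; exists t0.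
  split => //.
  move=> y hy hT.
  have agree : forall j, j < m -> y j = x j.
    move=> j hj; rewrite (body_restr_agree hy) ?size_restr /a ?nth_restr //;
      by apply: (leq_trans hj); rewrite leq_maxl.
  have e1 := hm y agree k (ltnSn k).
  have [t0 [[_ hc] et]] := hT k.+1.
  have st0 : size t0 = k.+1 by have := congr1 size et; rewrite size_restr /act_str size_mkseq.
  have kN : k < N by rewrite leq_maxr.
  have e3 : nth false t0 k = x k.
    rewrite -(comp_nth hc) ?size_restr ?st0 // /a nth_restr //.
  apply: hk'.
  have := congr1 (fun s => nth false s k) et; simpl.
  rewrite nth_restr // act_str_nth ?st0 // e3 !act_pt e1 => ->.
  done.
Qed.
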